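(* Let $3\le n\le k$ be integers, let $X$ be the discrete-time Markov chain on $\mathbb{N}^{n-1}$ described in the context and $Y$ the chain embedded in $X$ at its visits to $S$. For $b\in\mathbb{R}$ let $V(\mathbf{x})=\sum_{i=1}^{n-1}x_i^2+b\sum_{1\le i<l\le n-1}x_ix_l$ and, for $\mathbf{x}\in S$, $\Delta_V(\mathbf{x})=\mathbb{E}[V(\mathbf{Y}_{t+1})-V(\mathbf{x})\mid \mathbf{Y}_t=\mathbf{x}]$. Then for $\mathbf{x}\in S\setminus S^\star$, $$k\,\Delta_V(\mathbf{x})=-(k-n)(2+b(n-2))\sum_{i=1}^{n-1}x_i+(n-1)\Big(k-n+2+b\frac{(k-n+1)(n-2)}{2}\Big),$$ and for $j=1,\dots,n-2$ and $\mathbf{x}_j'=(1,\dots,1,x_{j+1},\dots,x_{n-1})$ (first $j$ entries equal to $1$, $x_i\ge2$ for $i=j+1,\dots,n-1$), $$k\,\Delta_V(\mathbf{x}_j')=\Big[(k-n+1)(2+b(k-1))\sum_{i=2}^{j+1}\frac{1}{k-n+i}-(k-n)(2+b(n-2))\Big]\sum_{i=j+1}^{n-1}x_i+\delta_j,$$ where each $\delta_j$ is a real number independent of $x_{j+1},\dots,x_{n-1}$ and $\max_{1\le j\le n-2}|\delta_j|<\infty$.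
   Context: $\mathbb{N}=\{0,1,2,\dots\}$. $\mathbf{0}$, $\mathbf{1}$ are the all-zero and all-one vectors of dimension $n-1$, $\mathbf{e}_l$ the $l$-th unit vector. For $j=0,\dots,n-1$, $R_j$ is the set of $\mathbf{x}\in\mathbb{N}^{n-1}$ with exactly $j$ zero entries. $X=\{\mathbf{X}_t\}_{t\ge1}$ is the Markov chain on $\mathbb{N}^{n-1}$ with nonzero transition probabilities: from $\mathbf{x}\in R_0$, to $\mathbf{x}-\mathbf{1}$ w.p. $\frac{k-(n-1)}{k}$ and to $\mathbf{x}+\mathbf{e}_l$ w.p. $\frac1k$ ($l=1,\dots,n-1$); from $\mathbf{x}\in R_j$, $1\le j\le n-2$, to $\mathbf{x}+\mathbf{e}_l$ w.p. $\frac{k-(n-1-j)}{kj}$ if $x_l=0$ and w.p. $\frac1k$ if $x_l\ge1$; from $\mathbf{0}$ to $\mathbf{e}_l$ w.p. $\frac1{n-1}$. $S=\{\mathbf{x}:x_i\ge1\ \forall i\}$ and $S^\star=\{\mathbf{x}\in S:\mathbf{x}-\mathbf{1}\notin S\}$ (elements of $S$ with some entry equal to $1$). The embedded chain is $\mathbf{Y}_t=\mathbf{X}_{\sigma_t}$, where $\sigma_t=\min\{m\ge1:\sum_{i=1}^m\mathds{1}_{\{\mathbf{X}_i\in S\}}=t\}$; it is a Markov chain on $S$. *)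

(* Defs.v *)
From HB Require Import structures.
From mathcomp Require Import all_boot all_order all_algebra.
From mathcomp Require Import all_classical all_reals all_analysis.
Set Implicit Arguments. Unset Strict Implicit. Unset Printing Implicit Defensive.
Import Order.TTheory GRing.Theory Num.Theory.
Import numFieldNormedType.Exports.
Local Open Scope ring_scope.

(* States: vectors of N^(n-1), coordinates indexed by 'I_(n.-1)
   (paper coordinate i, 1<=i<=n-1, is index i-1 here). *)
Definition vec (n : nat) := {ffun 'I_n.-1 -> nat}.

Definition nzeros n (x : vec n) : nat := #|[set i | x i == 0%N]|.
Definition vsub1 n (x : vec n) : vec n := [ffun i => (x i - 1)%N].
Definition vaddE n (x : vec n) (l : 'I_n.-1) : vec n :=
  [ffun i => (x i + (i == l))%N].
Definition vzero n : vec n := [ffun => 0%N].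

Definition inS n (x : vec n) : bool := [forall i, (0 < x i)%N].
Definition inSstar n (x : vec n) : bool := inS x && ~~ inS (vsub1 x).

Definition pX (R : realType) (n k : nat) (x y : vec n) : R :=
  let j := nzeros x in
  if j == 0%N then
    (if y == vsub1 x then (k%:R - (n%:R - 1)) / k%:R
     else if [exists l, y == vaddE x l] then 1 / k%:R else 0)
  else if x == vzero n then
    (if [exists l, y == vaddE x l] then 1 / (n%:R - 1) else 0)
  else
    match [pick l | y == vaddE x l] with
    | Some l => if x l == 0%N then (k%:R - (n%:R - 1 - j%:R)) / (k%:R * j%:R)
                else 1 / k%:R
    | None => 0
    end.

(* Every transition of X with positive probability is a "move":
   None = x -> x - 1, Some l = x -> x + e_l. *)
Definition move n := option 'I_n.-1.
Definition step n (x : vec n) (mv : move n) : vec n :=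
  match mv with None => vsub1 x | Some l => vaddE x l end.

(* Weight of a move sequence s started from x (with origin x0):
   probability of the path times (f(end) - f(x0)) if the path returns to S
   for the first time exactly at its last step, and 0 otherwise. *)
Fixpoint path_weight (R : realType) (n k : nat) (f : vec n -> R)
    (x0 x : vec n) (s : seq (move n)) : R :=
  match s with
  | [::] => 0
  | mv :: s' =>
      let y := step x mv in
      @pX R n k x y *
        (if inS y then (if s' is [::] then f y - f x0 else 0)
         else @path_weight R n k f x0 y s')
  end.

Definition hit_term (R : realType) (n k : nat) (f : vec n -> R) (x : vec n)
    (m : nat) : R :=
  \sum_(s : (m.+1).-tuple (move n)) @path_weight R n k f x x s.

(* Delta_f(x) = E[f(Y_{t+1}) - f(x) | Y_t = x], Y the chain embedded at
   the visits of X to S: sum over the time of first return to S. *)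
Definition DeltaE (R : realType) (n k : nat) (f : vec n -> R) (x : vec n) : R :=
  limn (series (@hit_term R n k f x)).

Definition DeltaE_cvg (R : realType) (n k : nat) (f : vec n -> R) (x : vec n)
  : Prop := cvgn (series (@hit_term R n k f x)).

Definition Vfun (R : realType) (n : nat) (b : R) (x : vec n) : R :=
  \sum_(i < n.-1) (x i)%:R ^+ 2
  + b * \sum_(i < n.-1) \sum_(l < n.-1 | (i < l)%N) (x i)%:R * (x l)%:R.

(* Main.v *)
Require Import Defs.
From HB Require Import structures.
From mathcomp Require Import all_boot all_order all_algebra.
From mathcomp Require Import all_classical all_reals all_analysis.
From mathcomp Require Import ring lra zify.
Import Order.TTheory GRing.Theory Num.Theory.
Import numFieldNormedType.Exports.
Local Open Scope ring_scope.
Set Implicit Arguments. Unset Strict Implicit. Unset Printing Implicit Defensive.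

Lemma sum_tupleS (R : realType) (T : finType) m (F : (m.+1).-tuple T -> R) :
  \sum_(t : (m.+1).-tuple T) F t =
  \sum_(x : T) \sum_(t : m.-tuple T) F (cons_tuple x t).
Proof.
rewrite pair_big /=.
rewrite (reindex (fun p : T * m.-tuple T => cons_tuple p.1 p.2)) //=.
exists (fun t : (m.+1).-tuple T => (thead t, behead_tuple t)).
  by move=> [x t] _ /=; congr (_, _); apply: val_inj.
by move=> t _ /=; case/tupleP: t => x t; apply: val_inj.
Qed.

Lemma sum_option (R : realType) (I : finType) (F : option I -> R) :
  \sum_(o : option I) F o = F None + \sum_(i : I) F (Some i).
Proof.
rewrite (bigD1 None) //=; congr (_ + _).
rewrite (reindex_omap Some id) /=; last by case.
by apply: eq_bigl => i; rewrite eqxx.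
Qed.

Fixpoint surv_weight (R : realType) (n k : nat) (h : vec n -> R)
    (x : vec n) (s : seq (move n)) : R :=
  match s with
  | [::] => h x
  | mv :: s' => @pX R n k x (step x mv) *
      (if inS (step x mv) then 0 else @surv_weight R n k h (step x mv) s')
  end.

Definition Fm (R : realType) (n k : nat) (f : vec n -> R) (x0 y : vec n) m : R :=
  \sum_(s : (m.+1).-tuple (move n)) @path_weight R n k f x0 y s.

Definition Sv (R : realType) (n k : nat) (h : vec n -> R) (y : vec n) m : R :=
  \sum_(s : m.-tuple (move n)) @surv_weight R n k h y s.

Lemma sum_tuple0 (R : realType) (T : finType) (F : 0.-tuple T -> R) c :
  (forall t : 0.-tuple T, F t = c) -> \sum_(t : 0.-tuple T) F t = c.
Proof.
move=> H; rewrite (eq_bigr (fun _ => c)) // sumr_const card_tuple expn0.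
by rewrite mulr1n.
Qed.

Lemma Fm0 (R : realType) n k (f : vec n -> R) x0 y :
  @Fm R n k f x0 y 0 = \sum_(mv : move n) @pX R n k y (step y mv) *
     (if inS (step y mv) then f (step y mv) - f x0 else 0).
Proof.
rewrite /Fm sum_tupleS; apply: eq_bigr => mv _.
apply: sum_tuple0 => -[[|? ?] //] Hs /=.
Qed.

Lemma FmS (R : realType) n k (f : vec n -> R) x0 y m :
  @Fm R n k f x0 y m.+1 = \sum_(mv : move n) @pX R n k y (step y mv) *
     (if inS (step y mv) then 0 else @Fm R n k f x0 (step y mv) m).
Proof.
rewrite /Fm sum_tupleS; apply: eq_bigr => mv _.
case: ifP => HS; last first.
  by rewrite mulr_sumr; apply: eq_bigr => -[[|? ?] //] Hs /=; rewrite HS.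
rewrite mulr0; apply: big1 => -[[|? ?] //] Hs /=; by rewrite HS mulr0.
Qed.

Lemma Sv0 (R : realType) n k (h : vec n -> R) y : @Sv R n k h y 0 = h y.
Proof. by apply: sum_tuple0 => -[[|? ?] //]. Qed.

Lemma SvS (R : realType) n k (h : vec n -> R) y m :
  @Sv R n k h y m.+1 = \sum_(mv : move n) @pX R n k y (step y mv) *
     (if inS (step y mv) then 0 else @Sv R n k h (step y mv) m).
Proof.
rewrite /Sv sum_tupleS; apply: eq_bigr => mv _.
case: ifP => HS; last first.
  by rewrite mulr_sumr; apply: eq_bigr => -[s Hs] _ /=; rewrite HS.
rewrite mulr0; apply: big1 => -[s Hs] _ /=; by rewrite HS mulr0.
Qed.

Lemma step_sum (R : realType) n k (f : vec n -> R) x0 y (P : pred (vec n))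
  (G : vec n -> R) M :
  (forall mv, @pX R n k y (step y mv) != 0 -> ~~ inS (step y mv) ->
     P (step y mv)) ->
  (forall z, P z -> \sum_(0 <= m < M) @Fm R n k f x0 z m =
                    G z - @Sv R n k G z M) ->
  \sum_(0 <= m < M.+1) @Fm R n k f x0 y m =
  \sum_(mv : move n) @pX R n k y (step y mv) *
    (if inS (step y mv) then f (step y mv) - f x0
     else G (step y mv) - @Sv R n k G (step y mv) M).
Proof.
move=> Hcl IH.
rewrite big_nat_recl // Fm0.
under eq_bigr do rewrite FmS.
rewrite exchange_big /= -big_split /=; apply: eq_bigr => mv _.
case: ifP => HS.
  by rewrite big1 ?addr0 // => m _; rewrite mulr0.
rewrite mulr0 add0r -mulr_sumr.
have [p0|pn0] := eqVneq (@pX R n k y (step y mv)) 0; first by rewrite p0 !mul0r.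
by rewrite (IH _ (Hcl mv pn0 (negbT HS))).
Qed.

Lemma partial_sum (R : realType) n k (f : vec n -> R) x0 (P : pred (vec n))
  (G : vec n -> R) :
  (forall z, P z -> G z = \sum_(mv : move n) @pX R n k z (step z mv) *
     (if inS (step z mv) then f (step z mv) - f x0 else G (step z mv))) ->
  (forall z mv, P z -> @pX R n k z (step z mv) != 0 -> ~~ inS (step z mv) ->
     P (step z mv)) ->
  forall M z, P z -> \sum_(0 <= m < M) @Fm R n k f x0 z m =
                    G z - @Sv R n k G z M.
Proof.
move=> Hh Hcl; elim=> [|M IH] z Pz.
  by rewrite big_geq // Sv0 subrr.
rewrite (step_sum (P := P) (G := G)) //; last by move=> mv; exact: Hcl.
rewrite (Hh z Pz) SvS -sumrB; apply: eq_bigr => mv _.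
by case: ifP => _; rewrite ?mulr0 ?subr0 // mulrBr.
Qed.

Lemma Sv_bound (R : realType) n k (P : pred (vec n)) (G U : vec n -> R)
  (C lam : R) : 0 <= lam ->
  (forall z mv, P z -> @pX R n k z (step z mv) != 0 -> ~~ inS (step z mv) ->
     P (step z mv)) ->
  (forall z mv, P z -> 0 <= @pX R n k z (step z mv)) ->
  (forall z, P z -> `|G z| <= C * U z) ->
  (forall z, P z -> 0 <= U z) -> 0 <= C ->
  (forall z, P z -> \sum_(mv : move n) @pX R n k z (step z mv) *
       (if inS (step z mv) then 0 else U (step z mv)) <= lam * U z) ->
  forall M z, P z -> `|@Sv R n k G z M| <= C * lam ^+ M * U z.
Proof.
move=> Hl0 Hcl Hp HG HU HC Hly; elim=> [|M IH] z Pz.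
  by rewrite Sv0 expr0 mulr1; exact: HG.
rewrite SvS.
apply: (le_trans (ler_norm_sum _ _ _)).
apply: (@le_trans _ _ (\sum_(mv : move n) (C * lam ^+ M) * (@pX R n k z (step z mv) *
       (if inS (step z mv) then 0 else U (step z mv))))).
  apply: ler_sum => mv _.
  case: ifP => HS; first by rewrite !mulr0 normr0.
  have [p0|pn0] := eqVneq (@pX R n k z (step z mv)) 0.
    by rewrite p0 !mul0r mulr0 normr0.
  have Pz' := Hcl z mv Pz pn0 (negbT HS).
  rewrite normrM (ger0_norm (Hp z mv Pz)) mulrCA.
  apply: ler_wpM2l; first exact: Hp.
  exact: IH.
rewrite -mulr_sumr exprS.
have -> : C * (lam * lam ^+ M) * U z = (C * lam ^+ M) * (lam * U z) by ring.
apply: ler_wpM2l; last exact: Hly.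
apply: mulr_ge0 => //.
exact: exprn_ge0.
Qed.

Lemma hit_cvg (R : realType) n k (f : vec n -> R) x0 (P : pred (vec n))
  (G U : vec n -> R) (C lam : R) :
  (forall z, P z -> G z = \sum_(mv : move n) @pX R n k z (step z mv) *
     (if inS (step z mv) then f (step z mv) - f x0 else G (step z mv))) ->
  (forall z mv, P z -> @pX R n k z (step z mv) != 0 -> ~~ inS (step z mv) ->
     P (step z mv)) ->
  (forall mv, @pX R n k x0 (step x0 mv) != 0 -> ~~ inS (step x0 mv) ->
     P (step x0 mv)) ->
  (forall M z, P z -> `|@Sv R n k G z M| <= C * lam ^+ M * U z) ->
  0 <= lam < 1 ->
  (series (@hit_term R n k f x0) @ \oo -->
  \sum_(mv : move n) @pX R n k x0 (step x0 mv) *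
     (if inS (step x0 mv) then f (step x0 mv) - f x0 else G (step x0 mv)))%classic.
Proof.
move=> Hh Hcl Hx0 Hb /andP[l0 l1].
set L := \sum_(mv : move n) _.
have E M : series (@hit_term R n k f x0) M.+1 =
   L - \sum_(mv : move n) @pX R n k x0 (step x0 mv) *
     (if inS (step x0 mv) then 0 else @Sv R n k G (step x0 mv) M).
  rewrite /series /= /hit_term.
  rewrite (step_sum (P := P) (G := G)) //; last exact: partial_sum.
  rewrite /L -sumrB; apply: eq_bigr => mv _.
  by case: ifP => _; rewrite ?mulr0 ?subr0 // mulrBr.
set K := \sum_(mv : move n) (if inS (step x0 mv) ||
   (@pX R n k x0 (step x0 mv) == 0) then 0
   else `|@pX R n k x0 (step x0 mv)| * (C * U (step x0 mv))).
have B M : `|series (@hit_term R n k f x0) M.+1 - L| <= K * lam ^+ M.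
  rewrite E addrAC subrr add0r normrN /K mulr_suml.
  apply: (le_trans (ler_norm_sum _ _ _)); apply: ler_sum => mv _.
  case: ifP => HS /=.
    by rewrite mulr0 normr0 mul0r.
  have [p0|pn0] := eqVneq (@pX R n k x0 (step x0 mv)) 0.
    by rewrite p0 !mul0r normr0.
  rewrite normrM -mulrA ler_wpM2l //.
  by rewrite mulrAC; apply: Hb; apply: Hx0 => //; rewrite HS.
have hl : `|lam| < 1 by rewrite ger0_norm.
rewrite -cvg_shiftS.
apply: (@squeeze_cvgr _ _ _ _ (fun M => L - K * lam ^+ M) (fun M => L + K * lam ^+ M)).
- apply: nearW => M /=; rewrite -ler_distl; exact: B.
- have := cvgB (cvg_cst L) (cvg_geometric K hl); rewrite subr0; exact.
- have := cvgD (cvg_cst L) (cvg_geometric K hl); rewrite addr0; exact.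
Qed.

Lemma sqr_sum (R : realType) m (F : 'I_m -> R) :
  (\sum_i F i) ^+ 2 = \sum_i F i ^+ 2 + 2 * \sum_(i : 'I_m) \sum_(l : 'I_m | (i < l)%N) F i * F l.
Proof.
rewrite expr2 mulr_suml.
have Hs i : F i * \sum_l F l = F i ^+ 2 + \sum_(l : 'I_m | (i < l)%N) F i * F l
                              + \sum_(l : 'I_m | (l < i)%N) F i * F l.
  rewrite mulr_sumr (bigID (fun l : 'I_m => (i < l)%N)) /=.
  suff -> : \sum_(l : 'I_m | ~~ (i < l)%N) F i * F l =
            F i ^+ 2 + \sum_(l : 'I_m | (l < i)%N) F i * F l by ring.
  rewrite (bigD1 i) /=; last by rewrite ltnn.
  rewrite expr2; congr (_ + _); apply: eq_bigl => l.
  case: (ltngtP l i) => [h|h|/val_inj ->]; rewrite ?eqxx ?andbF //=.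
    by apply/eqP => E; move: h; rewrite E ltnn.
under eq_bigr do rewrite Hs.
rewrite !big_split /= -addrA; congr (_ + _).
have -> : \sum_(i : 'I_m) \sum_(l : 'I_m | (l < i)%N) F i * F l = \sum_(i : 'I_m) \sum_(l : 'I_m | (i < l)%N) F i * F l.
  under eq_bigr do rewrite big_mkcond.
  rewrite exchange_big /=; apply: eq_bigr => i _.
  rewrite [RHS]big_mkcond; apply: eq_bigr => l _.
  by case: ifP => _ //; rewrite mulrC.
by rewrite mulr2n mulrDl !mul1r.
Qed.

Definition sg (R : realType) n (y : vec n) : R := \sum_i (y i)%:R.
Definition sq (R : realType) n (y : vec n) : R := \sum_i (y i)%:R ^+ 2.

Lemma Vfun_E (R : realType) n (b : R) (y : vec n) :
  Vfun b y = (1 - b / 2) * sq R y + (b / 2) * sg R y ^+ 2.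
Proof. rewrite /Vfun /sq /sg sqr_sum; by field. Qed.

Lemma sq_le (R : realType) n (y : vec n) : sq R y <= sg R y ^+ 2.
Proof.
rewrite /sq /sg sqr_sum lerDl; apply: mulr_ge0 => //.
by apply: sumr_ge0 => i _; apply: sumr_ge0 => l _; apply: mulr_ge0.
Qed.

Lemma sg_ge0 (R : realType) n (y : vec n) : 0 <= sg R y.
Proof. by apply: sumr_ge0. Qed.

Lemma nz_le n (y : vec n) : (nzeros y <= n.-1)%N.
Proof. by rewrite /nzeros; apply: leq_trans (max_card _) _; rewrite card_ord. Qed.

Lemma inS_nz n (y : vec n) : inS y = (nzeros y == 0%N).
Proof.
rewrite /inS /nzeros cards_eq0; apply/forallP/eqP => [H|H i].
  by apply/setP => i; rewrite !inE; have := H i; rewrite lt0n => /negbTE.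
have /setP/(_ i) := H; rewrite !inE => /negbT.
by rewrite lt0n.
Qed.

Lemma vaddE_eq n (y : vec n) l : vaddE y l l = (y l).+1.
Proof. by rewrite ffunE eqxx addn1. Qed.

Lemma vaddE_neq n (y : vec n) l i : i != l -> vaddE y l i = y i.
Proof. by move=> H; rewrite ffunE (negbTE H) addn0. Qed.

Lemma nz_add n (y : vec n) l :
  nzeros y = ((y l == 0%N) + nzeros (vaddE y l))%N.
Proof.
rewrite /nzeros (cardsD1 l) inE; congr (_ + _)%N; apply: eq_card => i.
rewrite !inE; have [->|H] := eqVneq i l; first by rewrite vaddE_eq.
by rewrite vaddE_neq.
Qed.

Lemma nz_vzero n : nzeros (vzero n) = n.-1.
Proof.
rewrite /nzeros (_ : [set i | vzero n i == 0%N] = [set: 'I_n.-1]).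
  by rewrite cardsT card_ord.
by apply/setP => i; rewrite !inE ffunE.
Qed.

Lemma vaddE_inj n (y : vec n) l l' : vaddE y l = vaddE y l' -> l = l'.
Proof.
move/(congr1 (fun g : vec n => g l)); rewrite vaddE_eq ffunE.
by case: eqP => // _; rewrite addn0 => /eqP; rewrite -addn1 -{2}[y l]addn0 eqn_add2l.
Qed.

Lemma vsub1_neq n (y : vec n) l : vsub1 y <> vaddE y l.
Proof. by move/(congr1 (fun g : vec n => g l)); rewrite vaddE_eq ffunE; lia. Qed.


Lemma pX_none (R : realType) n k (y : vec n) :
  nzeros y != 0%N -> y != vzero n -> @pX R n k y (vsub1 y) = 0.
Proof.
move=> H1 H2; rewrite /pX (negbTE H1) (negbTE H2).
by case: pickP => // l /eqP /vsub1_neq.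
Qed.

Lemma pX_some (R : realType) n k (y : vec n) l :
  nzeros y != 0%N -> y != vzero n -> @pX R n k y (vaddE y l) =
  if y l == 0%N then (k%:R - (n%:R - 1 - (nzeros y)%:R)) / (k%:R * (nzeros y)%:R)
  else 1 / k%:R.
Proof.
move=> H1 H2; rewrite /pX (negbTE H1) (negbTE H2).
case: pickP => [l' /eqP /vaddE_inj <- //|/(_ l)]; by rewrite eqxx.
Qed.

Lemma pX_S_none (R : realType) n k (y : vec n) :
  nzeros y = 0%N -> @pX R n k y (vsub1 y) = (k%:R - (n%:R - 1)) / k%:R.
Proof. by move=> H; rewrite /pX /= H !eqxx. Qed.

Lemma pX_S_some (R : realType) n k (y : vec n) l :
  nzeros y = 0%N -> @pX R n k y (vaddE y l) = 1 / k%:R.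
Proof.
move=> H; rewrite /pX /= H eqxx.
case: eqP => [E|_]; first by have := vsub1_neq (esym E).
by case: existsP => // -[]; exists l.
Qed.

Lemma cnt0 (R : realType) n (y : vec n) (c : R) :
  \sum_(l | y l == 0%N) c = c *+ nzeros y.
Proof. by rewrite sumr_const /nzeros cardsE. Qed.

Lemma cnt1 (R : realType) n (y : vec n) (c : R) :
  \sum_(l | y l != 0%N) c = c *+ n.-1 - c *+ nzeros y.
Proof.
have E : \sum_(l : 'I_n.-1) c = \sum_(l | y l == 0%N) c + \sum_(l | y l != 0%N) c.
  by rewrite (bigID (fun l => y l == 0%N)).
rewrite sumr_const card_ord cnt0 in E; rewrite E; ring.
Qed.

Lemma sumnz (R : realType) n (y : vec n) :
  \sum_(l | y l != 0%N) ((y l)%:R : R) = sg R y.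
Proof.
rewrite /sg [RHS](bigID (fun l => y l == 0%N)) /= [X in _ = X + _]big1 ?add0r // => l /eqP ->.
by [].
Qed.

Lemma sg_add (R : realType) n (y : vec n) l : sg R (vaddE y l) = sg R y + 1.
Proof.
rewrite /sg (bigD1 l) // [in RHS](bigD1 l) //= vaddE_eq -addn1 natrD -addrA.
rewrite [1 + _]addrC addrA; congr (_ + _); congr (_ + _).
by apply: eq_bigr => i Hi; rewrite vaddE_neq.
Qed.

Lemma sq_add (R : realType) n (y : vec n) l :
  sq R (vaddE y l) = sq R y + 2 * (y l)%:R + 1.
Proof.
rewrite /sq (bigD1 l) // [in RHS](bigD1 l) //= vaddE_eq -addn1 natrD.
rewrite (eq_bigr (fun i => (y i)%:R ^+ 2)); last by move=> i Hi; rewrite vaddE_neq.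
ring.
Qed.

Lemma natr_pred (R : realType) n : (0 < n)%N -> ((n.-1)%:R : R) = n%:R - 1.
Proof. by case: n => // n _; rewrite /= -addn1 natrD addrK. Qed.

Fixpoint Hs (R : realType) (kn : R) j : R :=
  if j is j'.+1 then Hs kn j' + 1 / (kn + j%:R) else 0.
Fixpoint rs (R : realType) (kk kn : R) j : R :=
  if j is j'.+1 then rs kk kn j' + kk * (1 + 2 * Hs kn j - 2 / kk) / (kn + j%:R)
  else 0.
Fixpoint ss (R : realType) (kk kn : R) j : R :=
  if j is j'.+1 then ss kk kn j' + kk * (2 * kk * Hs kn j - 1) / (kn + j%:R)
  else 0.

Definition Wfun (R : realType) n k (b : R) (y : vec n) : R :=
  let j := nzeros y in let kk : R := k%:R in let kn := k%:R - n%:R + 1 in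
  (1 - b / 2) * (sq R y + 2 * Hs kn j * sg R y + rs kk kn j)
  + (b / 2) * (sg R y ^+ 2 + 2 * kk * Hs kn j * sg R y + ss kk kn j).

Lemma W_S (R : realType) n k (b : R) (y : vec n) :
  nzeros y = 0%N -> @Wfun R n k b y = Vfun b y.
Proof. by move=> H; rewrite /Wfun H /= Vfun_E; ring. Qed.

Lemma sum_moves (R : realType) n k (y : vec n) (F : vec n -> R) :
  nzeros y != 0%N -> y != vzero n ->
  \sum_(mv : move n) @pX R n k y (step y mv) * F (step y mv) =
  \sum_(l | y l == 0%N) (k%:R - (n%:R - 1 - (nzeros y)%:R)) /
        (k%:R * (nzeros y)%:R) * F (vaddE y l)
  + \sum_(l | y l != 0%N) 1 / k%:R * F (vaddE y l).
Proof.
move=> H1 H2; rewrite sum_option /= pX_none // mul0r add0r.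
rewrite (bigID (fun l => y l == 0%N)) /=; congr (_ + _); apply: eq_bigr => l Hl.
  by rewrite pX_some // Hl.
by rewrite pX_some // (negbTE Hl).
Qed.

Lemma sum_moves1 (R : realType) n k (y : vec n) :
  nzeros y != 0%N -> y != vzero n ->
  \sum_(mv : move n) @pX R n k y (step y mv) =
  \sum_(l | y l == 0%N) (k%:R - (n%:R - 1 - (nzeros y)%:R)) /
        (k%:R * (nzeros y)%:R)
  + \sum_(l | y l != 0%N) 1 / k%:R.
Proof.
move=> H1 H2; rewrite sum_option /= pX_none // add0r.
rewrite (bigID (fun l => y l == 0%N)) /=; congr (_ + _); apply: eq_bigr => l Hl.
  by rewrite pX_some // Hl.
by rewrite pX_some // (negbTE Hl).
Qed.

Definition Wx (R : realType) n k (b sqv sgv : R) j : R :=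
  let kk : R := k%:R in let kn := k%:R - n%:R + 1 in
  (1 - b / 2) * (sqv + 2 * Hs kn j * sgv + rs kk kn j)
  + (b / 2) * (sgv ^+ 2 + 2 * kk * Hs kn j * sgv + ss kk kn j).

Lemma W_Wx (R : realType) n k (b : R) (y : vec n) :
  @Wfun R n k b y = @Wx R n k b (sq R y) (sg R y) (nzeros y).
Proof. by []. Qed.

Lemma W_add (R : realType) n k (b : R) (y : vec n) l :
  @Wfun R n k b (vaddE y l) = @Wx R n k b (sq R y + 1) (sg R y + 1)
     (nzeros (vaddE y l)) + (1 - b / 2) * (2 * (y l)%:R).
Proof. rewrite W_Wx sq_add sg_add /Wx /=; ring. Qed.

Lemma nz_add0 n (y : vec n) l : y l == 0%N -> nzeros (vaddE y l) = (nzeros y).-1.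
Proof. by move=> H; rewrite [nzeros y](@nz_add _ y l) H. Qed.

Lemma nz_add1 n (y : vec n) l : y l != 0%N -> nzeros (vaddE y l) = nzeros y.
Proof. by move=> H; rewrite [nzeros y](@nz_add _ y l) (negbTE H). Qed.

Lemma sumnzc (R : realType) n (y : vec n) (c : R) :
  \sum_(l | y l != 0%N) (c * (y l)%:R) = c * sg R y.
Proof. by rewrite -mulr_sumr sumnz. Qed.

Lemma harmonicW (R : realType) n k (b : R) (y : vec n) :
  (3 <= n)%N -> (n <= k)%N -> (0 < nzeros y)%N -> (nzeros y <= n - 2)%N ->
  \sum_(mv : move n) @pX R n k y (step y mv) * @Wfun R n k b (step y mv) = @Wfun R n k b y
  /\ \sum_(mv : move n) @pX R n k y (step y mv) = 1.
Proof.
move=> n3 nk j1 j2.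
have H1 : nzeros y != 0%N by rewrite -lt0n.
have H2 : y != vzero n.
  by apply/eqP => E; move: j2; rewrite E nz_vzero; lia.
split.
  rewrite sum_moves //.
  under eq_bigr => l Hl do rewrite W_add (eqP Hl) mulr0n !mulr0 addr0 (nz_add0 Hl).
  under [X in _ + X = _]eq_bigr => l Hl do rewrite W_add (nz_add1 Hl) mulrDr mulrA.
  rewrite big_split /=.
  under [X in _ + (_ + X) = _]eq_bigr => l _ do rewrite mulrA.
  rewrite sumnzc cnt0 cnt1.
  rewrite -[(_ * Wx _ _ _ _ _ _) *+ _]mulr_natr -[(_ * Wx _ _ _ _ _ _) *+ _]mulr_natr.
  rewrite -[(_ * Wx _ _ _ _ _ _) *+ _]mulr_natr.
  rewrite natr_pred; last by apply: leq_trans n3.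
  have k0 : k%:R != 0 :> R by rewrite pnatr_eq0 -lt0n; apply: leq_trans nk; apply: leq_trans n3.
  rewrite W_Wx /Wx.
  move: j1 H1; case Ej: (nzeros y) => [//|j] _ _ /=.
  have hnk : (n%:R <= k%:R :> R) by rewrite ler_nat.
  have hj : (0 <= j%:R :> R) by [].
  have kn1 : k%:R - n%:R + 1 + j.+1%:R != 0 :> R.
    rewrite -addn1 natrD; apply/eqP; lra.
  have j0 : j.+1%:R != 0 :> R by rewrite pnatr_eq0.
  rewrite -addn1 natrD in kn1 j0 *.
  by field; rewrite kn1 k0 j0.


rewrite sum_moves1 // cnt0 cnt1 -[_ / (_ * _) *+ _]mulr_natr -[1 / _ *+ nzeros y]mulr_natr -[1 / _ *+ n.-1]mulr_natr natr_pred; last by apply: leq_trans n3.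
have jn0 : (nzeros y)%:R != 0 :> R by rewrite pnatr_eq0.
have k0 : k%:R != 0 :> R by rewrite pnatr_eq0 -lt0n; apply: leq_trans nk; apply: leq_trans n3.
field.
by rewrite k0 jn0.
Qed.

Definition Pg n (y : vec n) : bool := (0 < nzeros y)%N && (nzeros y <= n - 2)%N.

Lemma Pg_nz n (y : vec n) : (3 <= n)%N -> Pg y -> nzeros y != 0%N /\ y != vzero n.
Proof.
move=> n3 /andP[h1 h2]; split; first by rewrite -lt0n.
by apply/eqP => E; move: h2; rewrite E nz_vzero; clear -n3; lia.
Qed.

Lemma harm_G (R : realType) n k (b : R) (x0 y : vec n) :
  (3 <= n)%N -> (n <= k)%N -> Pg y ->
  @Wfun R n k b y - Vfun b x0 =
  \sum_(mv : move n) @pX R n k y (step y mv) *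
     (if inS (step y mv) then Vfun b (step y mv) - Vfun b x0
      else @Wfun R n k b (step y mv) - Vfun b x0).
Proof.
move=> n3 nk Py; have /andP[h1 h2] := Py.
have [E1 E2] := @harmonicW R n k b y n3 nk h1 h2.
rewrite (eq_bigr (fun mv => @pX R n k y (step y mv) * @Wfun R n k b (step y mv)
                            - @pX R n k y (step y mv) * Vfun b x0)).
  by rewrite sumrB E1 -mulr_suml E2 mul1r.
move=> mv _; rewrite -mulrBr; congr (_ * _).
by case: ifP => // HS; rewrite W_S //; apply/eqP; rewrite -inS_nz.
Qed.

Lemma clos_G (R : realType) n k (y : vec n) mv :
  (3 <= n)%N -> Pg y -> @pX R n k y (step y mv) != 0 -> ~~ inS (step y mv) ->
  Pg (step y mv).
Proof.
move=> n3 Py; have [H1 H2] := Pg_nz n3 Py.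
case: mv => [l|] /=; last by rewrite pX_none ?eqxx.
move=> _; rewrite inS_nz -lt0n => h; apply/andP; split => //.
move: Py => /andP[_]; rewrite [nzeros y](@nz_add _ y l); lia.
Qed.

Lemma pX_ge0 (R : realType) n k (y : vec n) mv :
  (3 <= n)%N -> (n <= k)%N -> Pg y -> 0 <= @pX R n k y (step y mv).
Proof.
move=> n3 nk Py; have [H1 H2] := Pg_nz n3 Py.
case: mv => [l|] /=; last by rewrite pX_none.
rewrite pX_some //; case: ifP => _; last by rewrite div1r invr_ge0.
apply: divr_ge0; last by apply: mulr_ge0.
have hnk : (n%:R <= k%:R :> R) by rewrite ler_nat.
have : (0 <= (nzeros y)%:R :> R) by [].
lra.
Qed.

Definition Uf (R : realType) n k (y : vec n) : R :=
  k%:R ^+ nzeros y * (sg R y + 2 * k%:R) ^+ 2.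
Definition lamf (R : realType) n k : R :=
  (1 + 1 / (2 * k%:R)) ^+ 2 * ((n%:R - 1) / k%:R).

Lemma Uf_ge0 (R : realType) n k (y : vec n) : 0 <= @Uf R n k y.
Proof. by apply: mulr_ge0; [apply: exprn_ge0 | apply: sqr_ge0]. Qed.

Lemma lam_bounds (R : realType) n k : (3 <= n)%N -> (n <= k)%N ->
  0 <= @lamf R n k < 1.
Proof.
move=> n3 nk.
have hn : (3 <= n%:R :> R) by rewrite (ler_nat R 3 n).
have hk : (n%:R <= k%:R :> R) by rewrite ler_nat.
set K := k%:R in hk *; set N := n%:R in hn hk *.
have K0 : K != 0 by apply/eqP; lra.
have -> : @lamf R n k = (2 * K + 1) ^+ 2 * (N - 1) / (4 * K ^+ 3).
  by rewrite /lamf -/K -/N; field.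
have K3 : 0 < 4 * K ^+ 3 by apply: mulr_gt0 => //; apply: exprn_gt0; lra.
apply/andP; split.
  apply: divr_ge0; last lra.
  by apply: mulr_ge0; [apply: sqr_ge0 | lra].
rewrite ltr_pdivrMr // mul1r.
have : (2 * K + 1) ^+ 2 * (N - 1) <= (2 * K + 1) ^+ 2 * (K - 1).
  by apply: ler_wpM2l; [apply: sqr_ge0 | lra].
move=> h; apply: (le_lt_trans h).
rewrite !exprS expr0; nra.
Qed.

Lemma lyap (R : realType) n k (y : vec n) :
  (3 <= n)%N -> (n <= k)%N -> Pg y ->
  \sum_(mv : move n) @pX R n k y (step y mv) *
     (if inS (step y mv) then 0 else @Uf R n k (step y mv))
  <= @lamf R n k * @Uf R n k y.
Proof.
move=> n3 nk Py; have [H1 H2] := Pg_nz n3 Py.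
apply: (@le_trans _ _ (\sum_(mv : move n) @pX R n k y (step y mv) *
     @Uf R n k (step y mv))).
  apply: ler_sum => mv _; case: ifP => _ //.
  by rewrite mulr0; apply: mulr_ge0; [apply: pX_ge0 | apply: Uf_ge0].
rewrite sum_moves //.
under eq_bigr => l Hl do rewrite /Uf sg_add (nz_add0 Hl).
under [X in _ + X <= _]eq_bigr => l Hl do rewrite /Uf sg_add (nz_add1 Hl).
rewrite cnt0 cnt1.
rewrite -[(_ * (_ * _)) *+ _]mulr_natr -[(_ * (_ * _)) *+ _]mulr_natr.
rewrite -[(_ * (_ * _)) *+ _]mulr_natr.
rewrite natr_pred; last by apply: leq_trans n3.
move: Py => /andP[]; case Ej: (nzeros y) => [//|j] _ hjn /=.
rewrite /Uf Ej /lamf.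
have hjn' : (j.+3 <= n)%N by clear -hjn n3; lia.
have hn : (3 <= n%:R :> R) by rewrite (ler_nat R 3 n).
have hk : (n%:R <= k%:R :> R) by rewrite ler_nat.
have hj3 : (j%:R + 3 <= n%:R :> R) by rewrite -natrD ler_nat addn3.
have hj : (0 <= j%:R :> R) by [].
have hs := sg_ge0 R y.
rewrite -addn1 natrD.
set K := k%:R in hk *; set N := n%:R in hn hk hj3 *; set J := j%:R in hj hj3 *.
set s := sg R y.
have K0 : K != 0 by apply/eqP; lra.
have J0 : J + 1 != 0 by apply/eqP; lra.
set Q := (K - N + 1 + (J + 1)) / K + (N - 1) - (J + 1).
have -> : (K - (N - 1 - (J + 1))) / (K * (J + 1)) * (K ^+ j * (s + 1 + 2 * K) ^+ 2) * (J + 1) +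
  (1 / K * (K ^+ (j + 1) * (s + 1 + 2 * K) ^+ 2) * (N - 1) -
   1 / K * (K ^+ (j + 1) * (s + 1 + 2 * K) ^+ 2) * (J + 1)) =
  K ^+ j * ((s + 1 + 2 * K) ^+ 2 * Q).
  by rewrite /Q exprD expr1; field; rewrite K0 J0.
have -> : (1 + 1 / (2 * K)) ^+ 2 * ((N - 1) / K) * (K ^+ (j + 1) * (s + 2 * K) ^+ 2) =
  K ^+ j * (((1 + 1 / (2 * K)) * (s + 2 * K)) ^+ 2 * (N - 1)).
  by rewrite exprD expr1; field; rewrite K0.
apply: ler_wpM2l; first by apply: exprn_ge0; lra.
have hQ1 : Q <= N - 1.
  rewrite /Q.
  suff : (K - N + 1 + (J + 1)) / K <= J + 1 by lra.
  rewrite ler_pdivrMr; last lra.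
  have : J <= J * K by rewrite ler_peMr //; lra.
  lra.
have hQ0 : 0 <= Q.
  rewrite /Q; have : 0 <= (K - N + 1 + (J + 1)) / K by apply: divr_ge0; lra.
  lra.
apply: ler_pM => //; first exact: sqr_ge0.
have hs' : 0 <= s by [].
have hK2 : 0 <= 1 / (2 * K) by apply: divr_ge0; lra.
apply: lerXn2r; rewrite ?nnegrE; first lra.
  by apply: mulr_ge0; lra.
have -> : (1 + 1 / (2 * K)) * (s + 2 * K) = s + 1 + 2 * K + s / (2 * K).
  by field; rewrite K0.
have : 0 <= s / (2 * K) by apply: divr_ge0; lra.
lra.
Qed.

Definition Bdf (R : realType) n k : R :=
  \sum_(j < n) (`|Hs (k%:R - n%:R + 1) j| + `|rs k%:R (k%:R - n%:R + 1) j|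
               + `|ss k%:R (k%:R - n%:R + 1) j| : R).

Lemma le_sum_ord (R : realType) (F : nat -> R) m j :
  (forall i, 0 <= F i) -> (j < m)%N -> F j <= \sum_(i < m) F i.
Proof.
move=> hF hj; rewrite (bigD1 (Ordinal hj)) //= lerDl.
by apply: sumr_ge0 => i _.
Qed.

Definition Cf (R : realType) n k (b : R) (x0 : vec n) : R :=
  (`|1 - b / 2| + `|b / 2|) * (1 + 3 * @Bdf R n k + 2 * k%:R * @Bdf R n k)
  + `|Vfun b x0|.

Lemma Gbound (R : realType) n k (b : R) (x0 y : vec n) :
  (3 <= n)%N -> (n <= k)%N ->
  `|@Wfun R n k b y - Vfun b x0| <= @Cf R n k b x0 * @Uf R n k y.
Proof.
move=> n3 nk.
have hjn : (nzeros y < n)%N.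
  by apply: leq_ltn_trans (nz_le y) _; case: n n3 {nk x0 y}.
set Bd := @Bdf R n k.
have hB := @le_sum_ord R (fun j => `|Hs (k%:R - n%:R + 1) j| + `|rs k%:R (k%:R - n%:R + 1) j|
               + `|ss k%:R (k%:R - n%:R + 1) j| : R) n (nzeros y)
               (fun i => addr_ge0 (addr_ge0 (normr_ge0 _) (normr_ge0 _)) (normr_ge0 _)) hjn.
rewrite -/(Bdf R n k) -/Bd /= in hB.
set H := Hs _ (nzeros y) in hB; set r := rs _ _ (nzeros y) in hB; set s := ss _ _ (nzeros y) in hB.
have hH : `|H| <= Bd by move: (normr_ge0 r) (normr_ge0 s); lra.
have hr : `|r| <= Bd by move: (normr_ge0 H) (normr_ge0 s); lra.
have hs : `|s| <= Bd by move: (normr_ge0 r) (normr_ge0 H); lra.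
have hB0 : 0 <= Bd by move: (normr_ge0 H); lra.
have hk : (3 <= k%:R :> R) by rewrite (ler_nat R 3 k); apply: leq_trans nk.
set K := k%:R in hk *.
have sg0 := sg_ge0 R y; have sq0 : 0 <= sq R y by apply: sumr_ge0.
have sqle := sq_le R y.
set σ := sg R y in sg0 sqle *; set q := sq R y in sq0 sqle *.
set t := (σ + 1) ^+ 2.
have t1 : 1 <= t by rewrite /t; nra.
have ts : σ <= t by rewrite /t; nra.
have tss : σ ^+ 2 <= t by rewrite /t; nra.
move: hH hr hs; rewrite !ler_norml => /andP[hH1 hH2] /andP[hr1 hr2] /andP[hs1 hs2].
have p1 : H * σ <= Bd * σ by apply: ler_wpM2r.
have p2 : - Bd * σ <= H * σ by rewrite mulNr -mulNr; apply: ler_wpM2r.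
have p3 : Bd * σ <= Bd * t by apply: ler_wpM2l.
have p4 : Bd <= Bd * t by rewrite -{1}[Bd]mulr1; apply: ler_wpM2l.
have p5 : K * (Bd * σ) <= K * (Bd * t) by apply: ler_wpM2l; lra.
have p6 : K * (H * σ) <= K * (Bd * σ) by apply: ler_wpM2l; lra.
have p7 : K * (- Bd * σ) <= K * (H * σ) by apply: ler_wpM2l; lra.
set D := 1 + 3 * Bd + 2 * K * Bd.
have hX : `|q + 2 * H * σ + r| <= D * t.
  rewrite ler_norml /D; apply/andP; split; nra.
have hY : `|σ ^+ 2 + 2 * K * H * σ + s| <= D * t.
  rewrite ler_norml /D; apply/andP; split; nra.
rewrite -ler_norml.
have hD : 0 <= D by rewrite /D; nra.
have hW : `|@Wfun R n k b y| <= (`|1 - b / 2| + `|b / 2|) * (D * t).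
  have -> : @Wfun R n k b y = (1 - b / 2) * (q + 2 * H * σ + r)
                 + (b / 2) * (σ ^+ 2 + 2 * K * H * σ + s) by [].
  apply: (le_trans (ler_normD _ _)); rewrite (normrM (1 - b / 2)) (normrM (b / 2)) [X in _ <= X]mulrDl.
  by apply: lerD; apply: ler_wpM2l.
have tU : t <= @Uf R n k y.
  rewrite /Uf -/σ -/K.
  have h1 : t <= (σ + 2 * K) ^+ 2.
    by apply: lerXn2r; rewrite ?nnegrE; lra.
  apply: (le_trans h1); rewrite ler_peMl //; first exact: sqr_ge0.
  by apply: exprn_ege1; lra.
have hC : 0 <= @Cf R n k b x0.
  by rewrite /Cf; apply: addr_ge0 => //; apply: mulr_ge0 => //; apply: addr_ge0.
apply: (le_trans (ler_normB _ _)).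
apply: (@le_trans _ _ (@Cf R n k b x0 * t)); last by apply: ler_wpM2l.
rewrite /Cf -/Bd -/K -/D mulrDl.
apply: lerD; first by apply: (le_trans hW); rewrite mulrA.
by rewrite ler_peMr.
Qed.

Lemma Delta_main (R : realType) n k (b : R) (x0 : vec n) :
  (3 <= n)%N -> (n <= k)%N ->
  (forall mv, @pX R n k x0 (step x0 mv) != 0 -> ~~ inS (step x0 mv) ->
     Pg (step x0 mv)) ->
  @DeltaE_cvg R n k (Vfun b) x0 /\
  @DeltaE R n k (Vfun b) x0 =
  \sum_(mv : move n) @pX R n k x0 (step x0 mv) *
     (if inS (step x0 mv) then Vfun b (step x0 mv) - Vfun b x0
      else @Wfun R n k b (step x0 mv) - Vfun b x0).
Proof.
move=> n3 nk Hx0.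
have [l0 l1] := andP (@lam_bounds R n k n3 nk).
have hC : 0 <= @Cf R n k b x0.
  have hB : 0 <= @Bdf R n k.
    by apply: sumr_ge0 => i _; apply: addr_ge0; [apply: addr_ge0|].
  rewrite /Cf; apply: addr_ge0 => //; apply: mulr_ge0; first by apply: addr_ge0.
  by apply: addr_ge0; [apply: addr_ge0 => //; apply: mulr_ge0 | apply: mulr_ge0; [apply: mulr_ge0|]].
have Hb := @Sv_bound R n k (@Pg n) (fun y => @Wfun R n k b y - Vfun b x0)
  (@Uf R n k) (@Cf R n k b x0) (@lamf R n k) l0
  (fun z mv Pz => @clos_G R n k z mv n3 Pz)
  (fun z mv Pz => @pX_ge0 R n k z mv n3 nk Pz)
  (fun z _ => @Gbound R n k b x0 z n3 nk)
  (fun z _ => @Uf_ge0 R n k z) hC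
  (fun z Pz => @lyap R n k z n3 nk Pz).
have Hc := @hit_cvg R n k (Vfun b) x0 (@Pg n) (fun y => @Wfun R n k b y - Vfun b x0)
  (@Uf R n k) (@Cf R n k b x0) (@lamf R n k)
  (fun z Pz => @harm_G R n k b x0 z n3 nk Pz)
  (fun z mv Pz => @clos_G R n k z mv n3 Pz) Hx0 Hb (introT andP (conj l0 l1)).
split; first exact: cvgP Hc.
by apply: cvg_lim; [exact: norm_hausdorff | exact: Hc].
Qed.

Lemma inS_add n (y : vec n) l : inS y -> inS (vaddE y l).
Proof.
move/forallP => H; apply/forallP => i; rewrite ffunE.
exact: leq_trans (H i) (leq_addr _ _).
Qed.

Lemma sg_sub (R : realType) n (y : vec n) :
  inS y -> sg R (vsub1 y) = sg R y - (n.-1)%:R.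
Proof.
move/forallP => H; rewrite /sg.
rewrite (eq_bigr (fun i => (y i)%:R - 1)); last by move=> i _; rewrite ffunE natrB.
by rewrite sumrB sumr_const card_ord.
Qed.

Lemma sq_sub (R : realType) n (y : vec n) :
  inS y -> sq R (vsub1 y) = sq R y - 2 * sg R y + (n.-1)%:R.
Proof.
move/forallP => H; rewrite /sq /sg.
rewrite (eq_bigr (fun i => ((y i)%:R ^+ 2 - 2 * (y i)%:R) + 1)); last first.
  by move=> i _; rewrite ffunE natrB //; ring.
by rewrite big_split sumrB -mulr_sumr sumr_const card_ord.
Qed.

Lemma sumV_add (R : realType) n (b : R) (y : vec n) :
  \sum_(l : 'I_n.-1) (Vfun b (vaddE y l) - Vfun b y) =
  (1 - b / 2) * (2 * sg R y + (n.-1)%:R) + (b / 2) * (n.-1)%:R * (2 * sg R y + 1).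
Proof.
rewrite (eq_bigr (fun l => (1 - b / 2) * 2 * (y l)%:R
                      + ((1 - b / 2) + (b / 2) * (2 * sg R y + 1)))); last first.
  by move=> l _; rewrite !Vfun_E sq_add sg_add; ring.
rewrite big_split /= -mulr_sumr sumr_const card_ord -/(sg R y).
rewrite -mulr_natr; ring.
Qed.

Lemma case1 (R : realType) (n k : nat) (b : R) (x : vec n) :
  (3 <= n)%N -> (n <= k)%N -> inS x -> ~~ inSstar x ->
     @DeltaE_cvg R n k (Vfun b) x /\
     k%:R * @DeltaE R n k (Vfun b) x =
       - (k%:R - n%:R) * (2 + b * (n%:R - 2)) * \sum_(i < n.-1) (x i)%:R
       + (n%:R - 1) * (k%:R - n%:R + 2
                       + b * ((k%:R - n%:R + 1) * (n%:R - 2)) / 2).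
Proof.
move=> n3 nk Hx Hs.
have Hx1 : inS (vsub1 x) by move: Hs; rewrite /inSstar Hx /= negbK.
have hz : nzeros x = 0%N by apply/eqP; rewrite -inS_nz.
have Hx0 : forall mv, @pX R n k x (step x mv) != 0 -> ~~ inS (step x mv) ->
    Pg (step x mv).
  by case=> [l|] _ /=; [rewrite inS_add | rewrite Hx1].
have [Hcv HD] := Delta_main b n3 nk Hx0.
split => //; rewrite HD sum_option /= Hx1 pX_S_none //.
under eq_bigr => l _ do rewrite inS_add // pX_S_some //.
rewrite -mulr_sumr sumV_add !Vfun_E sq_sub // sg_sub // natr_pred; last by apply: leq_trans n3.
rewrite -/(sg R x).
have k0 : k%:R != 0 :> R by rewrite pnatr_eq0 -lt0n; apply: leq_trans nk; apply: leq_trans n3.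
by field.
Qed.

Lemma Hs_sum (R : realType) (K N : R) j :
  Hs (K - N + 1) j = \sum_(2 <= i < j.+2) 1 / (K - N + i%:R).
Proof.
elim: j => [|j IH]; first by rewrite big_geq.
rewrite big_nat_recr //= IH; congr (_ + 1 / _).
by rewrite -[j.+2]addn1 natrD -[j.+1]addn1 natrD; ring.
Qed.

Lemma card_lt m j : (j <= m)%N -> #|[set i : 'I_m | (i < j)%N]| = j.
Proof.
move=> hj; rewrite -sum1_card.
rewrite (eq_bigl (fun i : 'I_m => (i < j)%N)); last by move=> i; rewrite inE.
by rewrite -(big_ord_widen m (fun _ => 1%N) hj) sum1_card card_ord.
Qed.

Lemma sg_split (R : realType) n (x : vec n) j :
  (j <= n.-1)%N -> (forall i : 'I_n.-1, (i < j)%N -> x i = 1%N) ->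
  sg R x = j%:R + \sum_(i < n.-1 | (j <= i)%N) (x i)%:R.
Proof.
move=> hj H1; rewrite /sg (bigID (fun i : 'I_n.-1 => (i < j)%N)) /=.
congr (_ + _).
  rewrite (eq_bigr (fun _ => 1)); last by move=> i hi; rewrite H1.
  by rewrite -(big_ord_widen n.-1 (fun _ => (1 : R)) hj) sumr_const card_ord.
by apply: eq_bigl => i; rewrite -leqNgt.
Qed.

Definition Ef (R : realType) n k (b : R) (σ : R) j : R :=
  let K : R := k%:R in let N : R := n%:R in let m := N - 1 in
  let H := Hs (K - N + 1) j in let r := rs K (K - N + 1) j in
  let s := ss K (K - N + 1) j in
  (K - m) * ((1 - b / 2) * (- 2 * σ + m + 2 * H * (σ - m) + r)
             + (b / 2) * (- 2 * m * σ + m ^+ 2 + 2 * K * H * (σ - m) + s))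
  + (1 - b / 2) * (2 * σ + m) + (b / 2) * m * (2 * σ + 1).

Lemma case2 (R : realType) (n k : nat) (b : R) j (x : vec n) :
  (3 <= n)%N -> (n <= k)%N -> (1 <= j <= n - 2)%N ->
  (forall i : 'I_n.-1, (i < j)%N -> x i = 1%N) ->
  (forall i : 'I_n.-1, (j <= i)%N -> (2 <= x i)%N) ->
  @DeltaE_cvg R n k (Vfun b) x /\
  k%:R * @DeltaE R n k (Vfun b) x =
    ((k%:R - n%:R + 1) * (2 + b * (k%:R - 1))
       * (\sum_(2 <= i < j.+2) 1 / (k%:R - n%:R + i%:R))
     - (k%:R - n%:R) * (2 + b * (n%:R - 2)))
      * (\sum_(i < n.-1 | (j <= i)%N) (x i)%:R)
    + @Ef R n k b (j%:R) j.
Proof.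
move=> n3 nk /andP[j1 j2] H1 H2.
have hjm : (j <= n.-1)%N by clear -j2 n3; lia.
have Hx : inS x.
  apply/forallP => i; case: (ltnP i j) => hi; first by rewrite H1.
  by apply: leq_trans (H2 i hi).
have hz : nzeros x = 0%N by apply/eqP; rewrite -inS_nz.
have nzv : nzeros (vsub1 x) = j.
  rewrite /nzeros (_ : [set i | vsub1 x i == 0%N] = [set i : 'I_n.-1 | (i < j)%N]).
    exact: card_lt.
  apply/setP => i.
  rewrite !inE ffunE; case: (ltnP i j) => hi; first by rewrite H1.
  by have := H2 i hi; clear; lia.
have nS : ~~ inS (vsub1 x) by rewrite inS_nz nzv -lt0n.
have Pv : Pg (vsub1 x) by rewrite /Pg nzv j1 j2.
have Hx0 : forall mv, @pX R n k x (step x mv) != 0 -> ~~ inS (step x mv) ->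
    Pg (step x mv).
  by case=> [l|] _ /=; [rewrite inS_add | ].
have [Hcv HD] := Delta_main b n3 nk Hx0.
split => //; rewrite HD sum_option /= (negbTE nS) pX_S_none //.
under eq_bigr => l _ do rewrite inS_add // pX_S_some //.
rewrite -mulr_sumr sumV_add W_Wx sq_sub // sg_sub // nzv /Wx Vfun_E.
rewrite natr_pred; last by apply: leq_trans n3.
rewrite (sg_split R hjm H1) -Hs_sum /Ef /=.
have k0 : k%:R != 0 :> R by rewrite pnatr_eq0 -lt0n; apply: leq_trans nk; apply: leq_trans n3.
by field.
Qed.

Unset Implicit Arguments.

Theorem proposition7p4 (R : realType) (n k : nat) (b : R) :
  (3 <= n)%N -> (n <= k)%N ->
  (forall x : vec n, inS x -> ~~ inSstar x ->
     @DeltaE_cvg R n k (Vfun b) x /\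
     k%:R * @DeltaE R n k (Vfun b) x =
       - (k%:R - n%:R) * (2 + b * (n%:R - 2)) * \sum_(i < n.-1) (x i)%:R
       + (n%:R - 1) * (k%:R - n%:R + 2
                       + b * ((k%:R - n%:R + 1) * (n%:R - 2)) / 2)) /\
  (exists delta : nat -> R,
     forall j : nat, (1 <= j <= n - 2)%N ->
     forall x : vec n,
       (forall i : 'I_n.-1, (i < j)%N -> x i = 1%N) ->
       (forall i : 'I_n.-1, (j <= i)%N -> (2 <= x i)%N) ->
       @DeltaE_cvg R n k (Vfun b) x /\
       k%:R * @DeltaE R n k (Vfun b) x =
         ((k%:R - n%:R + 1) * (2 + b * (k%:R - 1))
            * (\sum_(2 <= i < j.+2) 1 / (k%:R - n%:R + i%:R))
          - (k%:R - n%:R) * (2 + b * (n%:R - 2)))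
           * (\sum_(i < n.-1 | (j <= i)%N) (x i)%:R)
         + delta j).
Proof.
move=> n3 nk; split.
  by move=> x Hx Hs; exact: case1.
exists (fun j => @Ef R n k b (j%:R) j) => j hj x H1 H2.
exact: case2.
Qed.
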